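(* Let $A,B$ be the Dickson matrices of $q$-polynomials $f,g\in\mathbb{F}_{q^n}[x]$ and suppose $A$ and $B$ are diagonally similar. Then there is $\lambda\in\mathbb{F}_{q^n}^*$ with $B=\mathrm{diag}(\lambda,\lambda^q,\dots,\lambda^{q^{n-1}})^{-1}A\,\mathrm{diag}(\lambda,\lambda^q,\dots,\lambda^{q^{n-1}})$, and then $g(x)=\lambda^{-1}f(\lambda x)$. Moreover, if $\mathbb{F}_{q'}$ ($\mathbb{F}_q\subseteq\mathbb{F}_{q'}\subseteq\mathbb{F}_{q^n}$) is the maximum field of linearity of $f$ (equivalently of $g$), then such a $\lambda$ is unique modulo $\mathbb{F}_{q'}^*$.
   Context: A $q$-polynomial is $f(x)=\sum_{j=0}^{n-1}a_jx^{q^j}\in\mathbb{F}_{q^n}[x]$; its Dickson matrix is the $n\times n$ matrix indexed by $\mathbb{Z}_n$ with $A[i|j]=a_{j-i}^{q^i}$. Two $n\times n$ matrices $A,B$ are diagonally similar if $B=D^{-1}AD$ for an invertible diagonal matrix $D$. The maximum field of linearity of $f$ is the largest subfield $\mathbb{F}_{q^e}$ ($e\mid n$) such that $f$ is $\mathbb{F}_{q^e}$-linear. *)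

(* Defs.v *)
From HB Require Import structures.
From mathcomp Require Import all_boot all_order all_algebra all_field.
Set Implicit Arguments. Unset Strict Implicit. Unset Printing Implicit Defensive.
Import GRing.Theory.
Local Open Scope ring_scope.

(* A q-polynomial f(x) = \sum_{j<n} a_j x^{q^j} over L = F_{q^n} is given by
   its coefficient vector a : 'I_n -> L. *)

Definition qcoef (L : fieldType) (n : nat) (a : 'I_n -> L) (k : nat) : L :=
  if insub (k %% n)%N is Some i then a i else 0.

Definition qpoly_eval (L : fieldType) (q n : nat) (a : 'I_n -> L) (x : L) : L :=
  \sum_(j < n) a j * x ^+ (q ^ j).

(* Dickson matrix: A[i|j] = a_{j-i}^{q^i}, indices in Z_n *)
Definition dickson (L : fieldType) (q n : nat) (a : 'I_n -> L) : 'M[L]_n :=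
  \matrix_(i < n, j < n) (qcoef a ((j + n - i) %% n)) ^+ (q ^ i).

Definition diag_similar (L : fieldType) (n : nat) (A B : 'M[L]_n) : Prop :=
  exists D : 'M[L]_n, [/\ is_diag_mx D, D \in unitmx & B = invmx D *m A *m D].

Definition qdiag (L : fieldType) (q n : nat) (lam : L) : 'M[L]_n :=
  diag_mx (\row_(i < n) lam ^+ (q ^ i)).

Definition in_Fqe (L : fieldType) (q e : nat) (c : L) : bool :=
  c ^+ (q ^ e) == c.

(* f : L -> L is F_{q^e}-linear (additivity is automatic for q-polynomials,
   but we state it anyway) *)
Definition Fqe_linear (L : fieldType) (q e : nat) (f : L -> L) : Prop :=
  (forall x y, f (x + y) = f x + f y) /\
  (forall c x, in_Fqe q e c -> f (c * x) = c * f x).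

Definition max_field_linearity (L : fieldType) (q n e : nat) (f : L -> L) : Prop :=
  [/\ (e %| n)%N, Fqe_linear q e f &
      forall e', (e' %| n)%N -> Fqe_linear q e' f -> (e' %| e)%N].

(* Main.v *)
Require Import Defs.
From HB Require Import structures.
From mathcomp Require Import all_boot all_order all_algebra all_field all_fingroup all_solvable.
From mathcomp Require Import zify ring.
From Stdlib Require Import ClassicalEpsilon.
Set Implicit Arguments. Unset Strict Implicit. Unset Printing Implicit Defensive.
Import GRing.Theory.
Local Open Scope ring_scope.

Lemma frob_mul (L : finFieldType) (q n : nat) : #|L| = (q ^ n)%N ->
  forall (z : L) j, z ^+ (q ^ (j * n)) = z.
Proof.
move=> HL z; elim=> [|j IH]; first by rewrite mul0n expn0 expr1.
by rewrite mulSn expnD exprM -HL expf_card IH.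
Qed.

Lemma frob_mod (L : finFieldType) (q n : nat) : #|L| = (q ^ n)%N ->
  forall (z : L) m, z ^+ (q ^ m) = z ^+ (q ^ (m %% n)).
Proof.
move=> HL z m; rewrite {1}(divn_eq m n) expnD exprM frob_mul //.
Qed.

Lemma frob_add (L : fieldType) (q : nat) (z : L) a b :
  z ^+ (q ^ (a + b)) = (z ^+ (q ^ a)) ^+ (q ^ b).
Proof. by rewrite expnD exprM. Qed.

Lemma qcoefE (L : fieldType) n (a : 'I_n -> L) k (Hk : (k %% n < n)%N) :
  qcoef a k = a (Ordinal Hk).
Proof. by rewrite /qcoef insubT. Qed.

Lemma qcoef_ord (L : fieldType) n (a : 'I_n -> L) (j : 'I_n) : qcoef a j = a j.
Proof.
have Hk : (j %% n < n)%N by rewrite modn_small.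
rewrite (qcoefE a Hk); congr a; by apply: val_inj => /=; rewrite modn_small.
Qed.

Lemma qcoef_mod (L : fieldType) n (a : 'I_n -> L) k : qcoef a (k %% n) = qcoef a k.
Proof. by rewrite /qcoef modn_mod. Qed.

Lemma min_sub (P : nat -> Prop) n : (0 < n)%N -> P n ->
  (forall a b, P a -> P b -> (b <= a)%N -> P (a - b)%N) ->
  exists e, [/\ (0 < e)%N, P e, (e %| n)%N & forall m, P m -> (e %| m)%N].
Proof.
move=> n0 Pn Psub.
pose b m := if excluded_middle_informative (P m) then true else false.
have bP m : b m = true <-> P m.
  by rewrite /b; case: excluded_middle_informative.
have ex : exists m, (0 < m)%N && b m by exists n; rewrite n0 /=; apply/bP.
case: (ex_minnP ex) => e /andP[e0 /bP Pe] emin.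
have key m : P m -> P (m %% e)%N.
  move=> Pm.
  have H : forall j, (j * e <= m)%N -> P (m - j * e)%N.
    elim => [|j IH] H; first by rewrite mul0n subn0.
    have H1 : (j * e <= m)%N by apply: leq_trans H; rewrite leq_mul2r leqnSn orbT.
    have -> : (m - j.+1 * e = (m - j * e) - e)%N by rewrite mulSn; lia.
    by apply: Psub => //; [apply: IH | rewrite mulSn in H; lia].
  have -> : (m %% e = m - m %/ e * e)%N by rewrite {2}(divn_eq m e); lia.
  by apply: H; rewrite leq_trunc_div.
have dv m : P m -> (e %| m)%N.
  move=> Pm; rewrite /dvdn; case: eqP => // /eqP Hm.
  have : (e <= m %% e)%N by apply: emin; rewrite lt0n Hm /=; apply/bP/key.
  by rewrite leqNgt ltn_pmod.
by exists e; split => //; apply: dv.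
Qed.

Lemma unit_pow (L : finFieldType) (z : L) : z != 0 -> z ^+ #|L|.-1 = 1.
Proof.
move=> z0; apply: (mulfI z0); rewrite mulr1 -exprS prednK ?expf_card //.
exact: (leq_trans _ (finNzRing_gt1 L)).
Qed.

Lemma h90 (L : finFieldType) (M N : nat) (x : L) : (M * N)%N = #|L|.-1 ->
  x != 0 -> x ^+ N = 1 -> exists2 y, y != 0 & y ^+ M = x.
Proof.
move=> HMN x0 xN.
set Q := #|L|.-1 in HMN.
have Q0 : (0 < Q)%N by rewrite /Q -ltnS prednK ?finNzRing_gt1 //; exact: (leq_trans _ (finNzRing_gt1 L)).
pose rs := enum (predC1 (0 : L)).
have : has Q.-primitive_root rs.
  apply: has_prim_root => //; last by rewrite -cardE cardC1.
  - by apply/allP => z; rewrite mem_enum /= => z0; rewrite unity_rootE unit_pow.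
  - exact: enum_uniq.
case/hasP => z; rewrite mem_enum /= => z0 zp.
have [i Hi] := prim_rootP zp (unit_pow x0).
have N0 : (0 < N)%N by rewrite lt0n; apply/eqP => N0; move: Q0; rewrite -HMN N0 muln0.
have : (M %| i)%N.
  rewrite -(dvdn_pmul2r N0) HMN (prim_order_dvd zp) exprM -Hi.
  by rewrite xN.
move=> /dvdnP [k Hk]; exists (z ^+ k); first by rewrite expf_neq0.
by rewrite -exprM -Hk Hi.
Qed.

Lemma cocycle (L : finFieldType) (q n : nat) (phi : nat -> L) (S : nat -> Prop) :
  (1 < q)%N -> (0 < n)%N -> #|L| = (q ^ n)%N -> phi 0%N = 1 ->
  (forall m, phi (m + n)%N = phi m) -> (forall m, phi m != 0) ->
  (forall s, S s -> forall i, phi (i + s)%N = phi i * phi s ^+ (q ^ i)) ->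
  exists2 lam : L, lam != 0 & forall s, S s -> phi s * lam = lam ^+ (q ^ s).
Proof.
move=> q1 n0 HL phi0 phin phinz HS.
pose G m := forall i, phi (i + m)%N = phi i * phi m ^+ (q ^ i).
have Gn : G n.
  move=> i; rewrite phin -[n]add0n phin phi0 expr1n mulr1 //.
have Gsub : forall a b, G a -> G b -> (b <= a)%N -> G (a - b)%N.
  move=> a b Ga Gb ba; have ea := subnK ba; move: (a - b)%N ea => c ea.
  subst a => i.
  have h1 := Gb (i + c)%N; have h2 := Ga i; have h3 := Gb c.
  apply: (mulIf (expf_neq0 (q ^ (i + c)) (phinz b))).
  rewrite -h1 -addnA h2 h3 exprMn -exprM -expnD [(c + i)%N]addnC mulrA //.
have [e [e0 Ge edn ediv]] := min_sub n0 Gn Gsub.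
set x := phi e.
pose s j := (\sum_(i < j) q ^ (i * e))%N.
have phis j : phi (j * e)%N = x ^+ s j.
  elim: j => [|j IH]; first by rewrite mul0n phi0 /s big_ord0 expr0.
  rewrite mulSn addnC Ge IH /s big_ord_recr /= exprD //.
have sq j : ((q ^ e - 1) * s j = q ^ (j * e) - 1)%N.
  elim: j => [|j IH]; first by rewrite /s big_ord0 muln0 mul0n expn0.
  rewrite /s big_ord_recr /= -/(s j) mulnDr IH mulSn expnD.
  have P1 : (1 <= q ^ (j * e))%N by rewrite expn_gt0 ltnW.
  have Q1 : (1 <= q ^ e)%N by rewrite expn_gt0 ltnW.
  move: P1 Q1; move: (q ^ (j * e))%N (q ^ e)%N => P Q P1 Q1.
  rewrite mulnBl mul1n; nia.
have hn : (n %/ e * e = n)%N by rewrite divnK.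
have xN : x ^+ s (n %/ e)%N = 1 by rewrite -phis hn -(add0n n) phin phi0.
have x0 : x != 0 by apply: phinz.
have hM : ((q ^ e - 1) * s (n %/ e)%N)%N = #|L|.-1 by rewrite sq hn HL subn1.
have [lam lam0 Hlam] := h90 hM x0 xN.
exists lam => // t St.
have /dvdnP [k ->] := ediv t (HS t St).
rewrite phis -Hlam -exprM sq -exprSr subn1 prednK //.
by rewrite expn_gt0 ltnW.
Qed.

Lemma diag_unit (L : fieldType) n (d : 'rV[L]_n) : (forall i, d 0 i != 0) ->
  diag_mx d \in unitmx.
Proof.
by move=> H; rewrite unitmxE det_diag unitfE; apply/prodf_neq0 => i _.
Qed.

Lemma diag_rel (L : fieldType) n (d : 'rV[L]_n) (A B : 'M[L]_n) :
  (forall i, d 0 i != 0) ->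
  (B = invmx (diag_mx d) *m A *m diag_mx d <->
   forall i j, d 0 i * B i j = A i j * d 0 j).
Proof.
move=> H; have U := diag_unit H; split.
  move=> HB i j.
  have E : diag_mx d *m B = A *m diag_mx d.
    by rewrite HB !mulmxA mulmxV // mul1mx.
  by move/matrixP: E => /(_ i j); rewrite mul_diag_mx mul_mx_diag !mxE.
move=> HE.
have E : diag_mx d *m B = A *m diag_mx d.
  by apply/matrixP => i j; rewrite mul_diag_mx mul_mx_diag !mxE.
by rewrite -mulmxA -E mulKmx.
Qed.

Lemma modlem n i j : (0 < n)%N -> (i < n)%N -> (j < n)%N ->
  ((((j + n - i) %% n) %% n + i) %% n = j)%N.
Proof.
move=> n0 ilt jlt; rewrite modn_mod modnDml subnK ?modnDr ?modn_small //.
by apply: leq_trans (ltnW ilt) _; rewrite leq_addl.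
Qed.

Lemma modlem0 n j : (j < n)%N -> ((j + n - 0) %% n = j)%N.
Proof. by move=> *; rewrite subn0 modnDr modn_small. Qed.

Lemma lam_rel (L : finFieldType) (q n : nat) (a b : 'I_n -> L) (lam : L) :
  (0 < n)%N -> #|L| = (q ^ n)%N -> lam != 0 ->
  (dickson q b = invmx (qdiag q n lam) *m dickson q a *m qdiag q n lam <->
   forall j : 'I_n, lam * b j = a j * lam ^+ (q ^ j)).
Proof.
move=> n0 HL l0; rewrite /qdiag diag_rel; last by move=> i; rewrite mxE expf_neq0.
split.
  move=> H j; have := H (Ordinal n0) j.
  by rewrite !mxE /= modlem0 // qcoef_ord qcoef_ord !expn0 !expr1.
move=> H i j; rewrite !mxE.
have Hk : (((j + n - i) %% n) %% n < n)%N by rewrite ltn_pmod.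
rewrite !(qcoefE _ Hk).
set o := Ordinal Hk.
have := congr1 (fun z => z ^+ (q ^ i)) (H o) => /=.
rewrite !exprMn -frob_add (frob_mod HL lam (o + i)) /= modlem //.
Qed.

Lemma modlem2 n i s : (0 < n)%N -> (((i + s) %% n + n - i %% n) %% n = s %% n)%N.
Proof.
move=> n0; apply/eqP; rewrite -(eqn_modDl (i %% n)) subnKC.
  by rewrite modnDr modn_mod modnDml.
by apply: leq_trans (ltnW (ltn_pmod i n0)) _; rewrite leq_addl.
Qed.

Lemma exist_lam (L : finFieldType) (q n : nat) (a b : 'I_n -> L) :
  (1 < q)%N -> (0 < n)%N -> #|L| = (q ^ n)%N ->
  diag_similar (dickson q a) (dickson q b) ->
  exists2 lam : L, lam != 0 & forall j : 'I_n, lam * b j = a j * lam ^+ (q ^ j).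
Proof.
move=> q1 n0 HL [D [/diag_mxP [d ->] Du HB]].
have d0 : forall i, d 0 i != 0.
  move: Du; rewrite unitmxE det_diag unitfE => /prodf_neq0 H i; exact: H.
move/(diag_rel _ _ d0): HB => H.
pose dd m := d 0 (Ordinal (ltn_pmod m n0)).
have ddE (j : 'I_n) : dd j = d 0 j.
  by congr (d 0); apply: val_inj => /=; rewrite modn_small.
have dd0 m : dd m != 0 by apply: d0.
pose phi m := dd m / dd 0%N.
have Hrow (j : 'I_n) : dd 0%N * b j = a j * d 0 j.
  have := H (Ordinal n0) j; rewrite !mxE /= modlem0 // !qcoef_ord !expn0 !expr1.
  suff -> : dd 0%N = d 0 (Ordinal n0) by [].
  by rewrite /dd; f_equal; apply: val_inj; rewrite /= mod0n.
have [lam lam0 Hlam] : exists2 lam : L, lam != 0 &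
    forall s, qcoef a s != 0 -> phi s * lam = lam ^+ (q ^ s).
  apply: (@cocycle L q n phi (fun s => qcoef a s != 0)) => //.
  - by rewrite /phi divff.
  - move=> m; rewrite /phi /dd; congr (d 0 _ / _); apply: val_inj => /=.
    by rewrite modnDr.
  - by move=> m; rewrite /phi mulf_neq0 ?invr_eq0.
  move=> s as0 i.
  have h1 := H (Ordinal (ltn_pmod i n0)) (Ordinal (ltn_pmod (i + s) n0)).
  have h0 := Hrow (Ordinal (ltn_pmod s n0)).
  rewrite !mxE /= modlem2 // !qcoef_mod in h1.
  rewrite !(qcoefE _ (ltn_pmod s n0)) in as0 h1.
  set al := a _ in as0 h0 h1; set be := b _ in h0 h1.
  rewrite -/(dd i) -/(dd (i + s)%N) in h1.
  rewrite -/(dd s) in h0.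
  rewrite /phi (frob_mod HL (dd s / dd 0%N) i).
  have Hbe : be = al * dd s / dd 0%N.
    apply: (mulfI (dd0 0%N)); rewrite h0; field; exact: dd0.
  rewrite Hbe !exprMn ?exprVn in h1.
  have alQ : al ^+ (q ^ (i %% n)) != 0 by rewrite expf_neq0.
  have dQ : dd 0%N ^+ (q ^ (i %% n)) != 0 by rewrite expf_neq0.
  move: h1 alQ dQ; rewrite expr_div_n.
  move: (al ^+ _) (dd s ^+ _) (dd 0%N ^+ _) => A S0 Z h1 A0 Z0.
  have : dd (i + s)%N = dd i * S0 / Z.
    apply: (mulfI A0); rewrite -h1; field; by [].
  move=> ->; field; by rewrite ?Z0 ?dd0.
exists lam => // j.
have hr := Hrow j; rewrite -ddE in hr.
case: (eqVneq (a j) 0) => aj.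
  have : b j = 0 by apply: (mulfI (dd0 0%N)); rewrite hr aj !mul0r mulr0.
  by move=> ->; rewrite aj mulr0 mul0r.
have := Hlam j; rewrite qcoef_ord /phi => /(_ aj) hl.
have -> : b j = a j * dd j / dd 0%N.
  apply: (mulfI (dd0 0%N)); rewrite hr; field; exact: dd0.
by rewrite -hl mulrC -!mulrA.
Qed.

Lemma qpoly_zero (L : finFieldType) (q n : nat) (c : 'I_n -> L) :
  (1 < q)%N -> #|L| = (q ^ n)%N ->
  (forall x : L, \sum_(j < n) c j * x ^+ (q ^ j) = 0) -> forall j, c j = 0.
Proof.
move=> q1 HL H j.
pose p : {poly L} := \sum_(i < n) c i *: 'X^(q ^ i).
have pE x : p.[x] = \sum_(i < n) c i * x ^+ (q ^ i).
  by rewrite /p horner_sum; apply: eq_bigr => i _; rewrite hornerZ hornerXn.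
have p0 : p = 0.
  apply: (@roots_geq_poly_eq0 _ p (enum L)).
  - by apply/allP => x _; rewrite /root pE H.
  - exact: enum_uniq.
  rewrite -cardE HL; apply: leq_trans (size_sum _ _ _) _.
  apply/bigmax_leqP => i _; apply: leq_trans (size_scale_leq _ _) _.
  by rewrite size_polyXn ltn_exp2l.
have := congr1 (fun r : {poly L} => r`_(q ^ j)) p0.
rewrite /= coef0 /p coef_sum (bigD1 j) //= coefZ coefXn eqxx mulr1 big1 ?addr0 //.
move=> i ij; rewrite coefZ coefXn.
case: eqP => [/expnI E|_]; last by rewrite mulr0.
by move: ij; rewrite (_ : j = i) ?eqxx //; apply: val_inj; apply: E.
Qed.

Lemma eval_rel (L : fieldType) (q n : nat) (a b : 'I_n -> L) (lam : L) :
  lam != 0 -> (forall j : 'I_n, lam * b j = a j * lam ^+ (q ^ j)) ->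
  forall x, qpoly_eval q b x = lam^-1 * qpoly_eval q a (lam * x).
Proof.
move=> l0 H x; rewrite /qpoly_eval mulr_sumr; apply: eq_bigr => j _.
have -> : b j = lam^-1 * (a j * lam ^+ (q ^ j)) by rewrite -H mulKf.
by rewrite exprMn !mulrA.
Qed.

Lemma lin_conj (L : fieldType) (q e : nat) (f g : L -> L) (lam : L) :
  lam != 0 -> (forall x, g x = lam^-1 * f (lam * x)) ->
  Fqe_linear q e f -> Fqe_linear q e g.
Proof.
move=> l0 H [Hadd Hsc]; split.
  by move=> x y; rewrite !H mulrDr Hadd mulrDr.
move=> c x hc; rewrite !H (_ : lam * (c * x) = c * (lam * x)); last by ring.
by rewrite Hsc //; ring.
Qed.

Lemma lin_conj_iff (L : fieldType) (q e : nat) (f g : L -> L) (lam : L) :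
  lam != 0 -> (forall x, g x = lam^-1 * f (lam * x)) ->
  Fqe_linear q e f <-> Fqe_linear q e g.
Proof.
move=> l0 H; split; first exact: lin_conj H.
apply: (@lin_conj _ _ _ g f lam^-1); first by rewrite invr_eq0.
by move=> x; rewrite H invrK mulrA mulfV // mul1r mulrA mulfV // mul1r.
Qed.

Lemma frob_iter (L : fieldType) (q m : nat) (z : L) : z ^+ (q ^ m) = z ->
  forall k, z ^+ (q ^ (k * m)) = z.
Proof.
move=> H; elim=> [|k IH]; first by rewrite mul0n expn0 expr1.
by rewrite mulSn frob_add H IH.
Qed.

Theorem mainTheorem9 (L : finFieldType) (q n : nat) (a b : 'I_n -> L) :
  (1 < q)%N -> (0 < n)%N -> #|L| = (q ^ n)%N ->
  diag_similar (dickson q a) (dickson q b) ->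
  [/\ exists2 lam : L, lam != 0 &
        dickson q b = invmx (qdiag q n lam) *m dickson q a *m qdiag q n lam,
      forall lam : L, lam != 0 ->
        dickson q b = invmx (qdiag q n lam) *m dickson q a *m qdiag q n lam ->
        forall x : L, qpoly_eval q b x = lam^-1 * qpoly_eval q a (lam * x),
      forall e : nat,
        max_field_linearity q n e (qpoly_eval q a) <->
        max_field_linearity q n e (qpoly_eval q b) &
      forall e : nat, max_field_linearity q n e (qpoly_eval q a) ->
      forall lam mu : L, lam != 0 -> mu != 0 ->
        dickson q b = invmx (qdiag q n lam) *m dickson q a *m qdiag q n lam ->
        (dickson q b = invmx (qdiag q n mu) *m dickson q a *m qdiag q n mu
         <-> in_Fqe q e (mu / lam))].
Proof.
move=> q1 n0 HL Hds.
have [lam0 l00 Hl0] := exist_lam q1 n0 HL Hds.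
have Hg0 := eval_rel l00 Hl0.
split.
- by exists lam0 => //; apply: (proj2 (lam_rel a b n0 HL l00)).
- move=> lam l0 Hr; apply: (eval_rel l0).
  exact: (proj1 (lam_rel a b n0 HL l0)).
- move=> e; have Hiff := fun e' => @lin_conj_iff _ q e' _ _ _ l00 Hg0.
  split; case=> h1 h2 h3; split => //.
  + exact/Hiff.
  + by move=> e' e'n /Hiff; apply: h3.
  + exact/Hiff.
  + by move=> e' e'n /Hiff; apply: h3.
move=> e [edn flin fmax] lam mu l0 m0 Hrl.
have Hr := proj1 (lam_rel a b n0 HL l0) Hrl.
rewrite (lam_rel a b n0 HL m0).
set t := mu / lam.
have t0 : t != 0 by rewrite /t mulf_neq0 ?invr_eq0.
have mut : mu = t * lam by rewrite /t divfK.
clearbody t.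
have key : forall j : 'I_n,
    (mu * b j = a j * mu ^+ (q ^ j)) <-> (a j * t ^+ (q ^ j) = a j * t).
  move=> j; have lQ : lam ^+ (q ^ j) != 0 by rewrite expf_neq0.
  rewrite mut exprMn -mulrA Hr; split.
    by move=> H; apply: (mulIf lQ); rewrite -mulrA -H; ring.
  by move=> H; rewrite [RHS]mulrA H; ring.
split.
- move=> Hm.
  pose P m := t ^+ (q ^ m) = t.
  have Pn : P n by rewrite /P -HL expf_card.
  have Psub : forall a' b', P a' -> P b' -> (b' <= a')%N -> P (a' - b')%N.
    move=> a' b' Pa Pb ba; have := frob_add q t b' (a' - b').
    by rewrite subnKC // Pa Pb => E; rewrite /P -E.
  have [e' [e'0 Pe' e'n e'div]] := min_sub n0 Pn Psub.
  have lin' : Fqe_linear q e' (qpoly_eval q a).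
    split; first exact: flin.1.
    move=> c x /eqP hc; rewrite /qpoly_eval mulr_sumr; apply: eq_bigr => j _.
    case: (eqVneq (a j) 0) => [->|aj]; first by rewrite !mul0r mulr0.
    have Pj : P j by apply: (mulfI aj); apply/(key j).
    have /dvdnP [k Ek] := e'div _ Pj.
    have cj : c ^+ (q ^ j) = c by rewrite Ek frob_iter.
    by rewrite exprMn cj; ring.
  have /dvdnP [k Ek] := fmax e' e'n lin'.
  by rewrite /in_Fqe Ek frob_iter.
- move=> ht j; apply/(key j).
  have H0 : forall x : L, \sum_(j < n) (a j * (t ^+ (q ^ j) - t)) * x ^+ (q ^ j) = 0.
    move=> x.
    rewrite (_ : \sum_(j < n) _ = qpoly_eval q a (t * x) - t * qpoly_eval q a x).
      by rewrite flin.2 // subrr.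
    rewrite /qpoly_eval mulr_sumr -sumrB; apply: eq_bigr => i _.
    rewrite [(t * x) ^+ _]exprMn; move: (t ^+ (q ^ i)) (x ^+ (q ^ i)) => T X; ring.
  have := qpoly_zero q1 HL H0 j.
  by rewrite mulrBr => /eqP; rewrite subr_eq0 => /eqP.
Qed.
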